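(* Let $\mathcal{F}\subseteq\mathcal{P}(\omega)$ be a free filter. Then $C_p(\xi(\mathcal{F}),2^\omega)$ is homeomorphic to $\mathcal{F}^\omega$ (with the product topology).
   Context: For a free filter $\mathcal{F}$ on $\omega$ (i.e., containing all cofinite sets), $\xi(\mathcal{F})$ is the space $\omega\cup\{\infty\}$ in which every point of $\omega$ is isolated and the neighborhoods of $\infty$ are the sets $\{\infty\}\cup A$ with $A\in\mathcal{F}$. For a space $X$, $C_p(X,2^\omega)$ is the set of continuous functions $X\to 2^\omega$ with the topology of pointwise convergence (subspace of $(2^\omega)^X$). $\mathcal{F}$ carries the subspace topology of the Cantor set $2^\omega\cong\mathcal{P}(\omega)$ (subsets identified with characteristic functions). *)

(* Defs.v *)
From HB Require Import structures.
From mathcomp Require Import all_boot all_order all_algebra.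
From mathcomp Require Import all_classical all_reals all_analysis.
Unset Printing Implicit Defensive.
Local Open Scope classical_set_scope.

(* Subsets of omega are identified with their characteristic functions,
   i.e. with points of the Cantor space 2^omega = cantor_space = nat -> bool. *)

Definition free_filter (F : set cantor_space) : Prop :=
  [/\ ~ F (fun _ => false),
      (forall A B : cantor_space, F A -> F B -> F (fun n => A n && B n)),
      (forall A B : cantor_space, F A -> (forall n, A n -> B n) -> F B) &
      (forall A : cantor_space, finite_set [set n | ~~ A n] -> F A)].

(* The space xi(F) = omega u {oo}; Some n is the point n, None is oo. *)
Definition xi (F : set cantor_space) : Type := option nat.

(* Subbase (in fact a base when F is a filter): singletons {n}, n in omega,
   and the sets {oo} u A with A in F. *)
Definition xi_subbase (F : set cantor_space) : set (set (xi F)) :=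
  [set U | (exists n : nat, U = [set Some n]) \/
           (exists A : cantor_space, F A /\
              U = [set x : xi F | match x with None => True | Some n => A n end])].

Section XiTopology.
Variable G : set cantor_space.
HB.instance Definition _ := Choice.on (xi G).
HB.instance Definition _ := isSubBaseTopological.Build (xi G) (xi_subbase G) id.
End XiTopology.

Definition Cp (F : set cantor_space) : set {ptws xi F -> cantor_space} :=
  [set f | continuous (f : xi F -> cantor_space)].

Definition Fomega (F : set cantor_space) : set {ptws nat -> cantor_space} :=
  [set s | forall n, F (s n)].

Definition homeomorphic {T U : topologicalType} (A : set T) (B : set U) : Prop :=
  exists (f : T -> U) (g : U -> T),
    [/\ (forall x, A x -> B (f x)), (forall y, B y -> A (g y)),
        (forall x, A x -> g (f x) = x), (forall y, B y -> f (g y) = y) &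
        ({within A, continuous f} /\ {within B, continuous g})].

(* Main.v *)
Require Import Defs.
From HB Require Import structures.
From mathcomp Require Import all_boot all_order all_algebra.
From mathcomp Require Import all_classical all_reals all_analysis.
From mathcomp Require Import finmap.
Local Open Scope classical_set_scope.

Section S.
Variable F : set cantor_space.
Hypothesis hF : free_filter F.

Lemma FT : F (fun _ => true).
Proof.
case: hF => _ _ _ hc; apply: hc.
suff -> : [set n : nat | ~~ true] = set0 by [].
by apply/seteqP; split => n.
Qed.

Definition Gnone : set_system (xi F) :=
  [set P | P None /\ exists A : cantor_space, F A /\ forall n, A n -> P (Some n)].

Lemma Gnone_filter : Filter Gnone.
Proof.
case: hF => _ hI hS _.
constructor.
- by split => //; exists (fun _ => true); split => //; exact: FT.
- move=> P Q [PN [A [FA HA]]] [QN [B [FB HB]]]; split => //.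
  exists (fun n => A n && B n); split; first exact: hI.
  by move=> n /andP[/HA ? /HB ?].
- move=> P Q PQ [PN [A [FA HA]]]; split; first exact: PQ.
  by exists A; split => // n /HA /PQ.
Qed.

Lemma nbhs_None (W : set (xi F)) : nbhs (None : xi F) W ->
  exists A : cantor_space, F A /\ forall n, A n -> W (Some n).
Proof.
rewrite (@nbhsE (xi F)) => - [_ [[B sB <-] [C BC Ct] sUBA]].
have GC : Gnone C.
  have /sB [D sD IDeC] := BC; rewrite -IDeC; apply: filter_bigI.
    exact: Gnone_filter.
  move=> E DE; have /sD := DE; move=> /set_mem [[n En]|[A [FA EA]]].
    by move: Ct; rewrite -IDeC => /(_ _ DE); rewrite En => /= -[].
  by rewrite EA; split => //; exists A; split.
have [_ [A [FA HA]]] := GC.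
by exists A; split => // n /HA Cn; apply: sUBA; exists C.
Qed.

Lemma open_sub (U : set (xi F)) : xi_subbase F U -> open U.
Proof.
move=> sU.
exists [set U]; last by rewrite predeqE => ?; split=> [[_ -> //]|]; exists U.
move=> _ ->; exists [fset U]%fset.
  by move=> ? /fset1P ->; apply/mem_set.
apply/seteqP; split => x. by apply; rewrite /= inE. by move=> Ux i /= /fset1P ->.
Qed.


Lemma near_bit (c : cantor_space) (j : nat) : nbhs c [set d : cantor_space | d j = c j].
Proof.
exact: (@proj_continuous nat (fun _ => bool) j c [set c j] (discrete_set1 _)).
Qed.

Lemma near_coord (X : eqType) (f : {ptws X -> cantor_space}) (x : X) (j : nat) :
  \forall g \near f, g x j = f x j.
Proof.
exact: (@proj_continuous X (fun _ => cantor_space) x f _ (near_bit (f x) j)).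
Qed.

Definition Phi (f : {ptws xi F -> cantor_space}) : {ptws nat -> cantor_space} :=
  fun k n => match n with
             | 0 => if odd k then f None k./2 else (f (Some 0) k./2 == f None k./2)
             | _ => f (Some n) k == f None k end.

Definition Psi (s : {ptws nat -> cantor_space}) : {ptws xi F -> cantor_space} :=
  fun x k => match x with
             | None => s k.*2.+1 0
             | Some n => (match n with 0 => s k.*2 0 | _ => s k n end) == s k.*2.+1 0
             end.

Lemma Phi_cont : continuous Phi.
Proof.
move=> f; apply/pointwise_cvgP => k; apply/pointwise_cvgP => n; apply/discrete_cvg.
change (\forall g \near f, Phi g k n = Phi f k n).
near=> g.
have e1 : g None k = f None k by near: g; exact: near_coord.
have e2 : g None k./2 = f None k./2 by near: g; exact: near_coord.
have e3 : g (Some 0) k./2 = f (Some 0) k./2 by near: g; exact: near_coord.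
have e4 : g (Some n) k = f (Some n) k by near: g; exact: near_coord.
by rewrite /Phi e1 e2 e3 e4.
Unshelve. all: by end_near.
Qed.

Lemma Psi_cont : continuous Psi.
Proof.
move=> s; apply/pointwise_cvgP => x; apply/pointwise_cvgP => k; apply/discrete_cvg.
change (\forall t \near s, Psi t x k = Psi s x k).
case: x => [[|n]|]; near=> t; rewrite /Psi.
- have e1 : t k.*2.+1 0 = s k.*2.+1 0 by near: t; exact: near_coord.
  have e2 : t k.*2 0 = s k.*2 0 by near: t; exact: near_coord.
  by rewrite e1 e2.
- have e1 : t k.*2.+1 0 = s k.*2.+1 0 by near: t; exact: near_coord.
  have e3 : t k n.+1 = s k n.+1 by near: t; exact: near_coord.
  by rewrite e1 e3.
- by near: t; exact: near_coord.
Unshelve. all: by end_near.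
Qed.

Lemma Phi_F (f : {ptws xi F -> cantor_space}) :
  continuous (f : xi F -> cantor_space) -> forall k, F (Phi f k).
Proof.
move=> cf k.
have : nbhs (None : xi F) (f @^-1` [set d | d k = f None k]).
  exact: (cf None _ (near_bit (f None) k)).
move=> /nbhs_None [A [FA HA]].
case: hF => _ hI hS hc.
have Fn0 : F (fun n => n != 0%N).
  apply: hc; apply: (sub_finite_set _ (finite_set1 0%N)) => n /= /negPn/eqP; done.
apply: (hS _ _ (hI _ _ FA Fn0)).
move=> [|n] /andP[An n0] //; by move: (HA _ An) => /= ->; rewrite /Phi eqxx.
Qed.

Lemma Psi_cont_fun (s : {ptws nat -> cantor_space}) :
  (forall k, F (s k)) -> continuous (Psi s : xi F -> cantor_space).
Proof.
move=> Fs [n|].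
  have h1 : nbhs (Some n : xi F) [set Some n].
    apply: open_nbhs_nbhs; split => //; apply: open_sub.
    by left; exists n.
  move=> W hW /=; apply: (filterS _ h1) => y /= ->; exact: nbhs_singleton.
have hfil : Filter (nbhs (None : xi F)) by exact: nbhs_filter.
apply/pointwise_cvgP => k; apply/discrete_cvg.
change (\forall x \near (None : xi F), Psi s x k = Psi s None k).
case: hF => _ hI hS hc.
have Fn0 : F (fun n => n != 0%N).
  apply: hc; apply: (sub_finite_set _ (finite_set1 0%N)) => n /= /negPn/eqP; done.
have FA : F (fun n => s k n && (n != 0%N)) by exact: hI.
have h1 : nbhs (None : xi F)
    [set x : xi F | match x with None => True | Some n => s k n && (n != 0%N) end].
  apply: open_nbhs_nbhs; split => //; apply: open_sub.
  by right; exists (fun n => s k n && (n != 0%N)); split.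
apply: (filterS _ h1) => -[n /andP[skn n0]|] //=.
rewrite /Psi; case: n skn n0 => [|n] // -> _.
by case: (s k.*2.+1 0).
Qed.

Lemma Psi_Phi f : Psi (Phi f) = f.
Proof.
apply/funext => -[[|n]|]; apply/funext => k;
  rewrite /Psi /Phi /= ?odd_double ?half_double ?uphalf_double //=.
- by case: (f (Some 0) k); case: (f None k).
- by case: (f (Some n.+1) k); case: (f None k).
Qed.

Lemma Phi_Psi s : Phi (Psi s) = s.
Proof.
apply/funext => k; apply/funext => -[|n]; rewrite /Phi /Psi /=.
  have := odd_double_half k; case: (odd k) => /= hk; rewrite ?add1n ?add0n in hk; rewrite hk //.
  by case: (s k 0); case: (s _ 0).
by case: (s k n.+1); case: (s _ 0).
Qed.

End S.

Theorem mainTheorem6 (F : set cantor_space) :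
  free_filter F -> homeomorphic (Cp F) (Fomega F).
Proof.
move=> hF; exists (@Phi F), (@Psi F); split.
- by move=> f cf; exact: Phi_F.
- by move=> s Fs; exact: Psi_cont_fun.
- by move=> f _; exact: Psi_Phi.
- by move=> s _; exact: Phi_Psi.
- by split; apply: continuous_subspaceT; [exact: Phi_cont | exact: Psi_cont].
Qed.
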